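(* Let $A,B$ be Hermitian operators on a finite-dimensional Hilbert space $\mathbb{S}_1\oplus\mathbb{S}_2$ (with $\mathbb{S}_1,\mathbb{S}_2$ orthogonal and $\mathbb{S}_i$ also denoting the orthogonal projector onto it). Suppose $A$ is invertible, $A=\mathbb{S}_1A\mathbb{S}_1+\mathbb{S}_2A\mathbb{S}_2$, and for positive numbers $G_1,G_2$: $$\|\mathbb{S}_1A^{-1}\mathbb{S}_1\|<1/G_1,\quad \|\mathbb{S}_2A^{-1}\mathbb{S}_2\|<1/G_2,$$ $$b_{11}=\|\mathbb{S}_1B\mathbb{S}_1\|<G_1/2,\quad b_{22}=\|\mathbb{S}_2B\mathbb{S}_2\|<G_2/2,\quad b_{12}=\|\mathbb{S}_1B\mathbb{S}_2\|<\min(G_1,G_2)/2.$$ Then $A-B$ is invertible, and $$\|\mathbb{S}_1(A-B)^{-1}\mathbb{S}_2\|<\frac{b_{12}}{(G_1-b_{11})(G_2-b_{22})-b_{12}^2},$$ $$\|\mathbb{S}_1(A-B)^{-1}\mathbb{S}_1\|<\frac{1}{G_1-b_{11}}\big(1+b_{12}\|\mathbb{S}_1(A-B)^{-1}\mathbb{S}_2\|\big),$$ $$\|\mathbb{S}_2(A-B)^{-1}\mathbb{S}_2\|<\frac{1}{G_2-b_{22}}\big(1+b_{12}\|\mathbb{S}_1(A-B)^{-1}\mathbb{S}_2\|\big).$$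
   Context: $\|\cdot\|$ denotes the operator 2-norm. *)

(* Defs.v *)
From HB Require Import structures.
From mathcomp Require Import all_boot all_order all_algebra.
From mathcomp Require Import complex.
From mathcomp Require Import boolp classical_sets reals.
Set Implicit Arguments. Unset Strict Implicit. Unset Printing Implicit Defensive.
Import Order.TTheory GRing.Theory Num.Theory.
Local Open Scope ring_scope.
Local Open Scope classical_set_scope.

Section Defs.
Variable R : realType.
Local Notation C := (R[i]).

Definition adjmx (n : nat) (A : 'M[C]_n) : 'M[C]_n := (map_mx (@conjc R) A)^T.

Definition herm_mx (n : nat) (A : 'M[C]_n) : Prop := adjmx A = A.

Definition orth_proj (n : nat) (P : 'M[C]_n) : Prop := herm_mx P /\ P *m P = P.

Definition vnorm (n : nat) (x : 'cV[C]_n) : R :=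
  Num.sqrt (\sum_(i < n) ((@complex.Re R (x i 0)) ^+ 2 + (@complex.Im R (x i 0)) ^+ 2)).

Definition opnorm (n : nat) (M : 'M[C]_n) : R :=
  sup [set vnorm (M *m x) | x in [set x : 'cV[C]_n | vnorm x <= 1]].
End Defs.

(* Main.v *)
Require Import Defs.
From HB Require Import structures.
From mathcomp Require Import all_boot all_order all_algebra.
From mathcomp Require Import complex.
From mathcomp Require Import boolp classical_sets reals.
From mathcomp Require Import ring lra.
Import Order.TTheory GRing.Theory Num.Theory.

Module Aux.
Local Open Scope ring_scope.
Local Open Scope complex_scope.
Set Implicit Arguments. Unset Strict Implicit. Unset Printing Implicit Defensive.
Section VN.
Variable R : realType.
Local Notation C := R[i].
Local Notation Re := (@complex.Re R).
Local Notation Im := (@complex.Im R).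

Lemma ReD (a b : C) : Re (a + b) = Re a + Re b. Proof. by case: a b => ? ? [? ?]. Qed.
Lemma ImD (a b : C) : Im (a + b) = Im a + Im b. Proof. by case: a b => ? ? [? ?]. Qed.
Lemma ReN (a : C) : Re (- a) = - Re a. Proof. by case: a. Qed.
Lemma ImN (a : C) : Im (- a) = - Im a. Proof. by case: a. Qed.
Lemma ReM (a b : C) : Re (a * b) = Re a * Re b - Im a * Im b. Proof. by case: a b => ? ? [? ?]. Qed.
Lemma ImM (a b : C) : Im (a * b) = Re a * Im b + Im a * Re b. Proof. by case: a b => ? ? [? ?]. Qed.
Lemma Re0 : Re (0 : C) = 0. Proof. by []. Qed.
Lemma Im0 : Im (0 : C) = 0. Proof. by []. Qed.
Lemma ReJ (a : C) : Re (a^*)%C = Re a. Proof. by case: a. Qed.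
Lemma ImJ (a : C) : Im (a^*)%C = - Im a. Proof. by case: a. Qed.
Lemma ReC (s : R) : Re (s%:C) = s. Proof. by []. Qed.
Lemma ImC (s : R) : Im (s%:C) = 0. Proof. by []. Qed.
Lemma Re_sum (I : Type) (r : seq I) (P : pred I) (F : I -> C) :
  Re (\sum_(i <- r | P i) F i) = \sum_(i <- r | P i) Re (F i).
Proof. exact: (big_morph _ ReD Re0). Qed.
Lemma Im_sum (I : Type) (r : seq I) (P : pred I) (F : I -> C) :
  Im (\sum_(i <- r | P i) F i) = \sum_(i <- r | P i) Im (F i).
Proof. exact: (big_morph _ ImD Im0). Qed.
Lemma C_eq (a b : C) : Re a = Re b -> Im a = Im b -> a = b.
Proof. by case: a b => ? ? [? ?] /= -> ->. Qed.

Variable n : nat.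
Implicit Types x y : 'cV[C]_n.

Definition nsq x : R := \sum_(i < n) (Re (x i 0) ^+ 2 + Im (x i 0) ^+ 2).
Definition rdot x y : R :=
  \sum_(i < n) (Re (x i 0) * Re (y i 0) + Im (x i 0) * Im (y i 0)).

Lemma vnormE x : vnorm x = Num.sqrt (nsq x). Proof. by []. Qed.
Lemma nsq_ge0 x : 0 <= nsq x.
Proof. by apply: sumr_ge0 => i _; rewrite addr_ge0 ?sqr_ge0. Qed.
Lemma vnorm_ge0 x : 0 <= vnorm x. Proof. exact: sqrtr_ge0. Qed.
Lemma vnorm_sqr x : vnorm x ^+ 2 = nsq x.
Proof. by rewrite vnormE sqr_sqrtr // nsq_ge0. Qed.

Lemma nsq_quad (s t : R) x y : nsq (s%:C *: x + t%:C *: y) =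
  s ^+ 2 * nsq x + 2 * s * t * rdot x y + t ^+ 2 * nsq y.
Proof.
rewrite /nsq /rdot !mulr_sumr -!big_split /=; apply: eq_bigr => i _.
by rewrite !mxE ReD ImD !ReM !ImM !ReC !ImC; ring.
Qed.

Lemma nsqD x y : nsq (x + y) = nsq x + 2 * rdot x y + nsq y.
Proof.
rewrite /nsq /rdot !mulr_sumr -!big_split /=; apply: eq_bigr => i _.
by rewrite !mxE ReD ImD; ring.
Qed.

Lemma nsqZ (c : C) x : nsq (c *: x) = (Re c ^+ 2 + Im c ^+ 2) * nsq x.
Proof.
rewrite /nsq !mulr_sumr; apply: eq_bigr => i _.
by rewrite !mxE !ReM !ImM; ring.
Qed.

Lemma nsq_eq0 x : nsq x = 0 -> x = 0.
Proof.
move=> h; apply/matrixP => i j; rewrite (ord1 j) !mxE.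
have hF : forall k : 'I_n, xpredT k -> 0 <= Re (x k 0) ^+ 2 + Im (x k 0) ^+ 2.
  by move=> k _; rewrite addr_ge0 ?sqr_ge0.
have /eqP := @psumr_eq0P _ _ xpredT _ hF h i isT.
rewrite paddr_eq0 ?sqr_ge0 // !sqrf_eq0 => /andP[/eqP h1 /eqP h2].
by apply: C_eq.
Qed.

Lemma rdot0 x : rdot x 0 = 0.
Proof. by rewrite /rdot big1 // => i _; rewrite !mxE /= !mulr0 addr0. Qed.

Lemma sq_le (D z : R) : 0 <= z -> D ^+ 2 <= z ^+ 2 -> D <= z.
Proof.
move=> z0 h; case: (lerP D z) => // hz.
have : 0 < (D - z) * (D + z) by rewrite mulr_gt0 // ?subr_gt0 //; lra.
rewrite -subr_sqr; lra.
Qed.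

Lemma CS x y : rdot x y <= vnorm x * vnorm y.
Proof.
have [Y0|Ypos] := eqVneq (nsq y) 0.
  by rewrite (nsq_eq0 Y0) rdot0 mulr_ge0 ?vnorm_ge0.
have Ygt0 : 0 < nsq y by rewrite lt0r Ypos nsq_ge0.
have := nsq_ge0 ((nsq y)%:C *: x + (- rdot x y)%:C *: y).
rewrite nsq_quad => h.
have hD : rdot x y ^+ 2 <= nsq x * nsq y.
  have : 0 <= nsq y * (nsq y * nsq x - rdot x y ^+ 2).
    by move: h; rewrite (_ : _ + _ = nsq y * (nsq y * nsq x - rdot x y ^+ 2)) //; ring.
  by rewrite pmulr_rge0 // subr_ge0 mulrC.
rewrite -(vnorm_sqr x) -(vnorm_sqr y) -exprMn in hD.
by apply: sq_le => //; rewrite mulr_ge0 ?vnorm_ge0.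
Qed.

Lemma vnormD x y : vnorm (x + y) <= vnorm x + vnorm y.
Proof.
have h := CS x y.
have e : vnorm (x + y) ^+ 2 = vnorm x ^+ 2 + 2 * rdot x y + vnorm y ^+ 2.
  by rewrite !vnorm_sqr nsqD.
have := vnorm_ge0 x; have := vnorm_ge0 y; have := vnorm_ge0 (x + y); nra.
Qed.

Lemma vnormZ (c : C) x :
  vnorm (c *: x) = Num.sqrt (Re c ^+ 2 + Im c ^+ 2) * vnorm x.
Proof. by rewrite !vnormE nsqZ sqrtrM // addr_ge0 ?sqr_ge0. Qed.

Lemma vnormZr (s : R) x : vnorm (s%:C *: x) = `|s| * vnorm x.
Proof. by rewrite vnormZ ReC ImC expr0n /= addr0 sqrtr_sqr. Qed.

Lemma vnormN x : vnorm (- x) = vnorm x.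
Proof.
by rewrite -scaleN1r vnormZ ReN ImN /= oppr0 expr0n addr0 sqrrN expr1n sqrtr1 mul1r.
Qed.

Lemma vnormB x y : vnorm x - vnorm y <= vnorm (x - y).
Proof.
have := vnormD (x - y) y; rewrite subrK; lra.
Qed.

Lemma vnorm0 : vnorm (0 : 'cV[C]_n) = 0.
Proof. by rewrite vnormE /nsq big1 ?sqrtr0 // => i _; rewrite mxE /= expr0n addr0. Qed.

Lemma vnorm_eq0 x : vnorm x = 0 -> x = 0.
Proof.
move=> h; apply: nsq_eq0; apply/eqP; rewrite eq_le nsq_ge0 andbT.
by rewrite -sqrtr_eq0 -vnormE h.
Qed.

Definition cabs (c : C) : R := Num.sqrt (Re c ^+ 2 + Im c ^+ 2).

Lemma vnorm_entry x i : cabs (x i 0) <= vnorm x.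
Proof.
rewrite /cabs vnormE ler_sqrt ?nsq_ge0 // /nsq (bigD1 i) //= lerDl.
by apply: sumr_ge0 => k _; rewrite addr_ge0 ?sqr_ge0.
Qed.

Lemma cabs_ge0 c : 0 <= cabs c. Proof. exact: sqrtr_ge0. Qed.

Lemma vnorm_sum (I : Type) (r : seq I) (P : pred I) (F : I -> 'cV[C]_n) :
  vnorm (\sum_(i <- r | P i) F i) <= \sum_(i <- r | P i) vnorm (F i).
Proof.
apply: (big_rec2 (fun a b => vnorm a <= b)); first by rewrite vnorm0.
move=> i a b _ h; apply: le_trans (vnormD _ _) _; exact: lerD.
Qed.

Definition mxK (M : 'M[C]_n) : R := \sum_(j < n) vnorm (M *m delta_mx j 0).

Lemma mxK_bound (M : 'M[C]_n) x : vnorm (M *m x) <= mxK M * vnorm x.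
Proof.
have -> : M *m x = \sum_(j < n) x j 0 *: (M *m delta_mx j 0).
  rewrite {1}(matrix_sum_delta x) mulmx_sumr; apply: eq_bigr => j _.
  by rewrite big_ord1 -scalemxAr.
apply: le_trans (vnorm_sum _ _ _) _; rewrite /mxK mulr_suml.
apply: ler_sum => j _; rewrite vnormZ -/(cabs _) mulrC.
by apply: ler_wpM2l; rewrite ?vnorm_ge0 ?vnorm_entry.
Qed.

Definition oset (M : 'M[C]_n) :=
  [set vnorm (M *m x) | x in [set x : 'cV[C]_n | vnorm x <= 1]]%classic.

Lemma opnormE (M : 'M[C]_n) : opnorm M = sup (oset M). Proof. by []. Qed.

Lemma oset0 (M : 'M[C]_n) : oset M 0.
Proof. by exists 0; rewrite /= ?vnorm0 ?ler01 // mulmx0 vnorm0. Qed.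

Lemma has_sup_oset (M : 'M[C]_n) : has_sup (oset M).
Proof.
split; first by exists 0; exact: oset0.
exists (mxK M); rewrite /oset => _ [x /= hx <-].
apply: le_trans (mxK_bound M x) _.
by rewrite -{2}(mulr1 (mxK M)) ler_wpM2l // /mxK sumr_ge0 // => j _; exact: vnorm_ge0.
Qed.

Lemma opnorm_ge0 (M : 'M[C]_n) : 0 <= opnorm M.
Proof. by rewrite opnormE; apply: (sup_upper_bound (has_sup_oset M)); exact: oset0. Qed.

Lemma opnorm_le (M : 'M[C]_n) (K : R) :
  (forall x, vnorm x <= 1 -> vnorm (M *m x) <= K) -> opnorm M <= K.
Proof.
move=> h; rewrite opnormE; apply: ge_sup; first by exists 0; exact: oset0.
by rewrite /oset => _ [x /= hx <-]; exact: h.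
Qed.

Lemma opnorm_bound (M : 'M[C]_n) x : vnorm (M *m x) <= opnorm M * vnorm x.
Proof.
have [x0|xn0] := eqVneq (vnorm x) 0.
  by rewrite (vnorm_eq0 x0) mulmx0 vnorm0 mulr0.
have xp : 0 < vnorm x by rewrite lt0r xn0 vnorm_ge0.
have h : oset M (vnorm (M *m ((vnorm x)^-1%:C *: x))).
  exists ((vnorm x)^-1%:C *: x) => //=.
  by rewrite vnormZr ger0_norm ?invr_ge0 ?vnorm_ge0 // mulVf.
have := sup_upper_bound (has_sup_oset M) h.
rewrite -opnormE -scalemxAr vnormZr ger0_norm ?invr_ge0 ?vnorm_ge0 //.
by rewrite ler_pdivrMl // mulrC.
Qed.

Definition cdot x y : C := \sum_(i < n) (x i 0)^* * y i 0.

Lemma rdotE x y : rdot x y = Re (cdot x y).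
Proof.
rewrite /rdot /cdot Re_sum; apply: eq_bigr => i _.
by rewrite ReM ReJ ImJ; ring.
Qed.

Lemma nsq_rdot x : nsq x = rdot x x.
Proof. by apply: eq_bigr => i _; rewrite !expr2. Qed.

Lemma cdotE x y : cdot x y = ((map_mx conjc x)^T *m y) 0 0.
Proof. by rewrite mxE; apply: eq_bigr => i _; rewrite !mxE. Qed.

Lemma adjmxE (M : 'M[C]_n) i j : adjmx M i j = (M j i)^*.
Proof. by rewrite !mxE. Qed.

Lemma adjmxM (M N : 'M[C]_n) : adjmx (M *m N) = adjmx N *m adjmx M.
Proof. by rewrite /adjmx map_mxM trmx_mul. Qed.

Lemma adjmx1 : adjmx (1%:M : 'M[C]_n) = 1%:M.
Proof. by rewrite /adjmx map_mx1 trmx1. Qed.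

Lemma adjmxB (M N : 'M[C]_n) : adjmx (M - N) = adjmx M - adjmx N.
Proof. by apply/matrixP => i j; rewrite !mxE rmorphB. Qed.

Lemma cdot_adj (M : 'M[C]_n) x y : cdot (adjmx M *m x) y = cdot x (M *m y).
Proof.
rewrite !cdotE map_mxM.
have -> : map_mx conjc (adjmx M) = M^T.
  by apply/matrixP => i j; rewrite !mxE conjcK.
by rewrite trmx_mul trmxK mulmxA.
Qed.

Lemma rdot_adj (M : 'M[C]_n) x y : rdot (adjmx M *m x) y = rdot x (M *m y).
Proof. by rewrite !rdotE cdot_adj. Qed.

Lemma le_of_sq (a b : R) : 0 <= a -> 0 <= b -> a ^+ 2 <= b * a -> a <= b.
Proof.
move=> a0 b0 h; case: (lerP a b) => // hab.
have : 0 < a * (a - b) by rewrite mulr_gt0 ?subr_gt0 //; lra.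
lra.
Qed.

Lemma adj_bound (M : 'M[C]_n) y : vnorm (adjmx M *m y) <= opnorm M * vnorm y.
Proof.
set z := adjmx M *m y.
apply: le_of_sq; rewrite ?vnorm_ge0 ?mulr_ge0 ?opnorm_ge0 ?vnorm_ge0 //.
rewrite vnorm_sqr nsq_rdot {1}/z rdot_adj.
apply: le_trans (CS _ _) _.
have := opnorm_bound M z; have := vnorm_ge0 y; have := vnorm_ge0 z.
have := vnorm_ge0 (M *m z); have := opnorm_ge0 M; nra.
Qed.

Lemma opnorm_adj (M : 'M[C]_n) : opnorm (adjmx M) <= opnorm M.
Proof.
apply: opnorm_le => x hx; apply: le_trans (adj_bound M x) _.
by rewrite -{2}(mulr1 (opnorm M)) ler_wpM2l ?opnorm_ge0.
Qed.

Lemma proj_bound (P : 'M[C]_n) x : orth_proj P -> vnorm (P *m x) <= vnorm x.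
Proof.
case=> hP PP; apply: le_of_sq; rewrite ?vnorm_ge0 //.
rewrite vnorm_sqr nsq_rdot -{1}hP rdot_adj mulmxA PP; exact: CS.
Qed.

Lemma herm_inv (M : 'M[C]_n) : herm_mx M -> M \in unitmx -> herm_mx (invmx M).
Proof.
move=> hM uM; rewrite /herm_mx.
have h : adjmx (invmx M) *m M = 1%:M by rewrite -{2}hM -adjmxM mulmxV // adjmx1.
by rewrite -[LHS]mulmx1 -(mulmxV uM) mulmxA h mul1mx.
Qed.

Section Blocks.
Variables (P1 P2 A B : 'M[C]_n).
Hypotheses (hP1 : P1 *m P1 = P1) (hP12 : P1 *m P2 = 0) (hP21 : P2 *m P1 = 0)
  (hsum : P1 + P2 = 1%:M) (hA : A = P1 *m A *m P1 + P2 *m A *m P2).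

Lemma hP2 : P2 *m P2 = P2.
Proof. by rewrite -{3}(mulmx1 P2) -hsum mulmxDr hP21 add0r. Qed.

Lemma P1A : P1 *m A = P1 *m A *m P1.
Proof.
by rewrite {1}hA mulmxDr !mulmxA hP1 hP12 !mul0mx addr0.
Qed.

Lemma AP1 : A *m P1 = P1 *m A *m P1.
Proof.
by rewrite {1}hA mulmxDl -!mulmxA hP1 hP21 !mulmx0 addr0.
Qed.

Lemma row_id : P1 *m (A - B) =
  (P1 *m A *m P1) *m P1 - (P1 *m B *m P1) *m P1 - (P1 *m B *m P2) *m P2.
Proof.
rewrite -!(mulmxA _ _ P1) -!(mulmxA _ _ P2) hP1 hP2 -P1A.
rewrite -addrA -opprD -(mulmxDr (P1 *m B)) hsum mulmx1.
by rewrite mulmxBr.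
Qed.

Lemma inv_id : A \in unitmx ->
  (P1 *m invmx A *m P1) *m (P1 *m A *m P1) = P1.
Proof.
move=> uA.
rewrite -AP1 -!mulmxA (mulmxA P1 A P1) -AP1.
by rewrite (mulmxA (invmx A)) mulVmx // mul1mx hP1.
Qed.

Lemma row_est (g : R) v : A \in unitmx -> 0 <= g ->
  g * opnorm (P1 *m invmx A *m P1) <= 1 ->
  g * vnorm (P1 *m v) - opnorm (P1 *m B *m P1) * vnorm (P1 *m v)
    - opnorm (P1 *m B *m P2) * vnorm (P2 *m v) <= vnorm (P1 *m ((A - B) *m v)).
Proof.
move=> uA g0 hg.
rewrite mulmxA row_id !mulmxBl -!(mulmxA _ _ v).
have hX : g * vnorm (P1 *m v) <= vnorm ((P1 *m A *m P1) *m (P1 *m v)).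
  have e : P1 *m v = (P1 *m invmx A *m P1) *m ((P1 *m A *m P1) *m (P1 *m v)).
    by rewrite mulmxA inv_id // mulmxA hP1.
  have h := opnorm_bound (P1 *m invmx A *m P1) ((P1 *m A *m P1) *m (P1 *m v)).
  rewrite -e in h.
  apply: le_trans (ler_wpM2l g0 h) _; rewrite mulrA.
  by rewrite -[X in _ <= X](mul1r) ler_wpM2r // vnorm_ge0.
have hY := opnorm_bound (P1 *m B *m P1) (P1 *m v).
have hZ := opnorm_bound (P1 *m B *m P2) (P2 *m v).
have h1 := vnormB ((P1 *m A *m P1) *m (P1 *m v) - (P1 *m B *m P1) *m (P1 *m v))
   ((P1 *m B *m P2) *m (P2 *m v)).
have h2 := vnormB ((P1 *m A *m P1) *m (P1 *m v)) ((P1 *m B *m P1) *m (P1 *m v)).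
move: hX hY hZ h1 h2.
move: (vnorm _) (vnorm _) (vnorm _) (vnorm _) (vnorm _) (vnorm _) (vnorm _).
move: (opnorm (P1 *m B *m P1)) (opnorm (P1 *m B *m P2)) => b1 b2.
move=> t0 t1 t2 t3 t4 t5 t6; move: (g * t6) (b1 * t6) (b2 * t2) => u1 u2 u3.
lra.
Qed.
End Blocks.
End VN.

Section Arith.
Variable R : realFieldType.

Lemma pick_g (G N : R) : 0 < G -> 0 <= N -> N < G^-1 -> exists g, G < g /\ g * N <= 1.
Proof.
move=> G0 N0 hN; have [->|Nn0] := eqVneq N 0.
  by exists (G + 1); rewrite mulr0 ler01; split => //; lra.
have Np : 0 < N by rewrite lt0r Nn0 N0.
exists N^-1; rewrite mulVf //; split => //.
by rewrite -ltf_pV2 ?posrE ?invr_gt0 // invrK.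
Qed.

Lemma div_le (b D D' : R) : 0 <= b -> 0 < D -> D <= D' -> b / D' <= b / D.
Proof.
move=> b0 D0 DD; apply: ler_wpM2l => //.
by rewrite lef_pV2 ?posrE //; apply: lt_le_trans DD.
Qed.

Lemma div_lt (b D D' : R) : 0 < b -> 0 < D -> D < D' -> b / D' < b / D.
Proof.
move=> b0 D0 DD; rewrite ltr_pM2l //.
by rewrite ltf_pV2 ?posrE //; apply: lt_trans DD.
Qed.

Lemma arith1 (c b p q x beta : R) : 0 < c -> 0 <= b -> p <= x ->
  c * q - b * p <= beta -> beta <= 1 -> q <= (1 + b * x) / c.
Proof.
move=> c0 b0 px h1 h2; rewrite ler_pdivlMr //.
have : 0 <= b * (x - p) by rewrite mulr_ge0 // subr_ge0.
rewrite mulrBr; lra.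
Qed.

Lemma arith2 (a c b p q : R) : 0 < a -> 0 < c -> 0 <= b -> 0 <= p -> 0 <= q ->
  b < a -> b < c -> a * p - b * q <= 0 -> c * q - b * p <= 0 -> p = 0 /\ q = 0.
Proof.
move=> a0 c0 b0 p0 q0 ba bc h1 h2.
have h3 : 0 <= (a - b) * p by rewrite mulr_ge0 // subr_ge0 ltW.
have h4 : 0 <= (c - b) * q by rewrite mulr_ge0 // subr_ge0 ltW.
have e1 : (a - b) * p = 0 by apply/eqP; rewrite eq_le h3 andbT; rewrite mulrBl; lra.
have e2 : (c - b) * q = 0 by apply/eqP; rewrite eq_le h4 andbT; rewrite mulrBl; lra.
move/eqP: e1; rewrite mulf_eq0 subr_eq0 => /orP[/eqP e|/eqP ->]; first by move: ba; rewrite e ltxx.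
move/eqP: e2; rewrite mulf_eq0 subr_eq0 => /orP[/eqP e|/eqP ->]; first by move: bc; rewrite e ltxx.
by [].
Qed.

Lemma arith3 (a c b p q beta : R) : 0 < a -> 0 <= b -> 0 <= q -> 0 < a * c - b ^+ 2 ->
  a * p - b * q <= 0 -> c * q - b * p <= beta -> beta <= 1 ->
  p <= b / (a * c - b ^+ 2).
Proof.
move=> a0 b0 q0 D0 h1 h2 h3; rewrite ler_pdivlMr //.
have c0 : 0 <= c.
  case: (lerP 0 c) => // cn; have : a * c < 0 by rewrite pmulr_rlt0.
  have := sqr_ge0 b; lra.
have h4 : 0 <= c * (b * q - a * p) by rewrite mulr_ge0 // subr_ge0; lra.
have h5 : 0 <= b * (1 - (c * q - b * p)) by rewrite mulr_ge0 // subr_ge0; lra.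
have e : p * (a * c - b ^+ 2) = b - c * (b * q - a * p) - b * (1 - (c * q - b * p)) by ring.
rewrite e; lra.
Qed.
Lemma arithE (g b u v q beta : R) : g * q - b * q - u <= beta -> u <= v ->
  (g - b) * q - v <= beta.
Proof. rewrite mulrBl; lra. Qed.
Lemma L1 (G b : R) : 0 < G -> b < G / 2 -> 0 < G - b.
Proof. move=> *; lra. Qed.
Lemma L2 (G g b : R) : G < g -> G - b < g - b.
Proof. move=> *; lra. Qed.
Lemma L3 (G b11 b12 : R) : b11 < G / 2 -> b12 < G / 2 -> b12 < G - b11.
Proof. move=> *; lra. Qed.
Lemma L4 (a c b : R) : 0 < c -> 0 <= b -> b < a -> b < c -> 0 < a * c - b ^+ 2.
Proof.
move=> c0 b0 ba bc.
have -> : a * c - b ^+ 2 = (a - b) * c + b * (c - b) by ring.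
by rewrite ltr_pwDl ?mulr_gt0 ?subr_gt0 // mulr_ge0 // subr_ge0 ltW.
Qed.
Lemma L5 (a a' c c' b : R) : 0 < a -> 0 < c -> a < a' -> c < c' ->
  a * c - b ^+ 2 < a' * c' - b ^+ 2.
Proof.
move=> a0 c0 aa cc; rewrite ltrD2r; apply: (@lt_trans _ _ (a' * c)).
  by rewrite ltr_pM2r.
by rewrite ltr_pM2l //; apply: lt_trans aa.
Qed.
End Arith.

End Aux.
Import Aux.
Unset Implicit Arguments.
Local Open Scope ring_scope.

Theorem lemma3 (R : realType) (n : nat) (S1 S2 A B : 'M[R[i]]_n) (G1 G2 : R) :
  orth_proj S1 -> S2 = 1%:M - S1 ->
  herm_mx A -> herm_mx B -> A \in unitmx ->
  A = S1 *m A *m S1 + S2 *m A *m S2 ->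
  0 < G1 -> 0 < G2 ->
  opnorm (S1 *m invmx A *m S1) < G1^-1 ->
  opnorm (S2 *m invmx A *m S2) < G2^-1 ->
  let b11 := opnorm (S1 *m B *m S1) in
  let b22 := opnorm (S2 *m B *m S2) in
  let b12 := opnorm (S1 *m B *m S2) in
  b11 < G1 / 2 -> b22 < G2 / 2 -> b12 < Num.min G1 G2 / 2 ->
  let x12 := opnorm (S1 *m invmx (A - B) *m S2) in
  [/\ (A - B) \in unitmx,
      x12 <= b12 / ((G1 - b11) * (G2 - b22) - b12 ^+ 2),
      (0 < b12 -> x12 < b12 / ((G1 - b11) * (G2 - b22) - b12 ^+ 2)),
      opnorm (S1 *m invmx (A - B) *m S1) < (G1 - b11)^-1 * (1 + b12 * x12)
    & opnorm (S2 *m invmx (A - B) *m S2) < (G2 - b22)^-1 * (1 + b12 * x12)].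
Proof.
move=> hS1 eS2 hAh hBh uA hAd G1p G2p hN1 hN2 b11 b22 b12 hb11 hb22 hb12 x12.
have hP1 : S1 *m S1 = S1 by case: hS1.
have hS1h : herm_mx S1 by case: hS1.
have h12 : S1 *m S2 = 0 by rewrite eS2 mulmxBr mulmx1 hP1 subrr.
have h21 : S2 *m S1 = 0 by rewrite eS2 mulmxBl mul1mx hP1 subrr.
have hsum : S1 + S2 = 1%:M by rewrite eS2 addrC subrK.
have hsum' : S2 + S1 = 1%:M by rewrite addrC.
have hQ2 : S2 *m S2 = S2 := hP2 h21 hsum.
have hS2h : herm_mx S2 by rewrite /herm_mx eS2 adjmxB adjmx1 hS1h.
have hS2 : orth_proj S2 by [].
have hAd' : A = S2 *m A *m S2 + S1 *m A *m S1 by rewrite addrC.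
have [g1 [Gg1 hg1]] := pick_g G1p (opnorm_ge0 _) hN1.
have [g2 [Gg2 hg2]] := pick_g G2p (opnorm_ge0 _) hN2.
have b11p : 0 <= b11 := opnorm_ge0 _.
have b22p : 0 <= b22 := opnorm_ge0 _.
have b12p : 0 <= b12 := opnorm_ge0 _.
have hb12a : b12 < G1 / 2 by apply: lt_le_trans hb12 _; apply: ler_wpM2r; rewrite ?invr_ge0 ?ler0n ?ge_min ?lexx ?orbT.
have hb12b : b12 < G2 / 2 by apply: lt_le_trans hb12 _; apply: ler_wpM2r; rewrite ?invr_ge0 ?ler0n ?ge_min ?lexx ?orbT.
have adjSMS : forall M : 'M[R[i]]_n, herm_mx M -> adjmx (S1 *m M *m S2) = S2 *m M *m S1.
  by move=> M hM; rewrite !adjmxM hS1h hS2h hM mulmxA.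
have b21le : opnorm (S2 *m B *m S1) <= b12 by rewrite /b12 -(adjSMS B hBh); exact: opnorm_adj.
pose a' := g1 - b11; pose c' := g2 - b22.
have E1 : forall v, a' * vnorm (S1 *m v) - b12 * vnorm (S2 *m v)
                     <= vnorm (S1 *m ((A - B) *m v)).
  move=> v; have := row_est B hP1 h12 h21 hsum hAd v uA (ltW (lt_trans G1p Gg1)) hg1.
  by move/arithE; apply; rewrite lexx.
have E2 : forall v, c' * vnorm (S2 *m v) - b12 * vnorm (S1 *m v)
                     <= vnorm (S2 *m ((A - B) *m v)).
  move=> v; have := row_est B hQ2 h21 h12 hsum' hAd' v uA (ltW (lt_trans G2p Gg2)) hg2.
  by move/arithE; apply; rewrite ler_wpM2r ?vnorm_ge0.
clearbody b11 b22 b12.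
pose a := G1 - b11; pose c := G2 - b22.
have a0 : 0 < a := L1 G1p hb11.
have c0 : 0 < c := L1 G2p hb22.
have aa' : a < a' := L2 b11 Gg1.
have cc' : c < c' := L2 b22 Gg2.
have ba : b12 < a := L3 hb11 hb12a.
have bc : b12 < c := L3 hb22 hb12b.
have a'0 : 0 < a' := lt_trans a0 aa'.
have c'0 : 0 < c' := lt_trans c0 cc'.
have D0 : 0 < a * c - b12 ^+ 2 := L4 c0 b12p ba bc.
have DD : a * c - b12 ^+ 2 < a' * c' - b12 ^+ 2 := L5 b12 a0 c0 aa' cc'.
have D'0 : 0 < a' * c' - b12 ^+ 2 := lt_trans D0 DD.
have uAB : (A - B) \in unitmx.
  rewrite unitmxE unitfE -det_tr; apply/negP => /det0P [w wn0 hw].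
  have hv : (A - B) *m w^T = 0 by rewrite -[A - B]trmxK -trmx_mul hw trmx0.
  have := E1 w^T; have := E2 w^T; rewrite hv !mulmx0 vnorm0 => e2 e1.
  have [p0 q0] := arith2 a'0 c'0 b12p (vnorm_ge0 _) (vnorm_ge0 _)
     (lt_trans ba aa') (lt_trans bc cc') e1 e2.
  have : w^T = 0.
    by rewrite -[w^T]mul1mx -hsum mulmxDl (vnorm_eq0 p0) (vnorm_eq0 q0) addr0.
  by move/(congr1 trmx); rewrite trmxK trmx0 => w0; move: wn0; rewrite w0 eqxx.
pose X := invmx (A - B).
have hXv : forall w : 'cV[R[i]]_n, (A - B) *m (X *m w) = w by move=> w; rewrite mulmxA mulmxV // mul1mx.
have hXh : herm_mx X by apply: herm_inv => //; rewrite /herm_mx adjmxB hAh hBh.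
have x12p : 0 <= x12 := opnorm_ge0 _.
have hx12' : x12 <= b12 / (a' * c' - b12 ^+ 2).
  apply: opnorm_le => x hx.
  have e1 := E1 (X *m (S2 *m x)); have e2 := E2 (X *m (S2 *m x)).
  rewrite hXv mulmxA h12 mul0mx vnorm0 in e1.
  rewrite hXv mulmxA hQ2 in e2.
  rewrite -!mulmxA; apply: (arith3 a'0 b12p (vnorm_ge0 _) D'0 e1 e2).
  exact: le_trans (proj_bound _ hS2) hx.
have hx12 : x12 <= b12 / (a * c - b12 ^+ 2).
  by apply: le_trans hx12' _; apply: div_le => //; apply: ltW.
split => //.
- by move=> bp; apply: le_lt_trans hx12' _; apply: div_lt.
- have hb : 0 < 1 + b12 * x12 by rewrite ltr_pwDl ?ltr01 ?mulr_ge0.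
  apply: (@le_lt_trans _ _ ((1 + b12 * x12) / a')); last by rewrite [X in _ < X]mulrC; apply: div_lt.
  apply: opnorm_le => x hx.
  have e1 := E1 (X *m (S1 *m x)).
  rewrite hXv mulmxA hP1 in e1.
  rewrite -!mulmxA; apply: (arith1 a'0 b12p _ e1).
    have h := opnorm_bound (S2 *m X *m S1) x.
    have e : S2 *m (X *m (S1 *m x)) = S2 *m X *m S1 *m x by rewrite !mulmxA.
    rewrite e; apply: le_trans h _.
    have hadj : opnorm (S2 *m X *m S1) <= x12 by rewrite /x12 -(adjSMS X hXh); exact: opnorm_adj.
    have := ler_wpM2l (opnorm_ge0 (S2 *m X *m S1)) hx; rewrite mulr1 => h2; exact: le_trans h2 hadj.
  exact: le_trans (proj_bound _ hS1) hx.
- have hb : 0 < 1 + b12 * x12 by rewrite ltr_pwDl ?ltr01 ?mulr_ge0.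
  apply: (@le_lt_trans _ _ ((1 + b12 * x12) / c')); last by rewrite [X in _ < X]mulrC; apply: div_lt.
  apply: opnorm_le => x hx.
  have e2 := E2 (X *m (S2 *m x)).
  rewrite hXv mulmxA hQ2 in e2.
  rewrite -!mulmxA; apply: (arith1 c'0 b12p _ e2).
    have h := opnorm_bound (S1 *m X *m S2) x.
    have e : S1 *m (X *m (S2 *m x)) = S1 *m X *m S2 *m x by rewrite !mulmxA.
    rewrite e; apply: le_trans h _.
    by apply: le_trans (ler_wpM2l x12p hx) _; rewrite mulr1.
  exact: le_trans (proj_bound _ hS2) hx.
Qed.
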